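(* Fix $g\ge2$ and let $F=F^{[g]}$. For every real orthogonal $g\times g$ matrix $U=(u_{jk})$ and every $X=(X_1,\dots,X_g)\in\mathcal D_F$, the tuple $UX=\left(\sum_k u_{1k}X_k,\dots,\sum_k u_{gk}X_k\right)$ lies in $\mathcal D_F$. In particular, $(\pm X_1,\dots,\pm X_g)\in\mathcal D_F$ for every choice of signs.
   Context: $F^{[g]}$ is defined recursively: $F^{[2]}=(\sigma_z,\sigma_x)$ with $\sigma_z=\begin{bmatrix}1&0\\0&-1\end{bmatrix}$, $\sigma_x=\begin{bmatrix}0&1\\1&0\end{bmatrix}$, and if $F^{[g]}=(F_1,\dots,F_g)$ then $F^{[g+1]}=(F_1\otimes\sigma_z,\dots,F_g\otimes\sigma_z,I\otimes\sigma_x)$. For a self-adjoint matrix tuple $A$, $\mathcal D_A=\bigcup_n\{X\in SM_n(\mathbb C)^g: I-\sum_i A_i\otimes X_i\succeq0\}$, where $SM_n(\mathbb C)^g$ is the set of $g$-tuples of self-adjoint $n\times n$ complex matrices. *)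

(* Defs.v *)
From HB Require Import structures.
From mathcomp Require Import all_boot all_order all_algebra.
From mathcomp Require Import complex mxtens.
From mathcomp Require Import reals.
Set Implicit Arguments. Unset Strict Implicit. Unset Printing Implicit Defensive.
Import Order.TTheory GRing.Theory Num.Theory.
Local Open Scope ring_scope.

Section Defs.
Variable C : numClosedFieldType.

Definition adjmx m n (M : 'M[C]_(m, n)) : 'M[C]_(n, m) := (map_mx Num.conj M)^T.

Definition selfadj n (M : 'M[C]_n) : Prop := adjmx M = M.

(* positive semidefinite: v^* M v >= 0 for all v (>= 0 in a numClosedField
   means real and nonnegative) *)
Definition psd n (M : 'M[C]_n) : Prop :=
  forall v : 'cV[C]_n, 0 <= (adjmx v *m M *m v) 0 0.

Definition inDA g d (A : 'I_g -> 'M[C]_d) n (X : 'I_g -> 'M[C]_n) : Prop :=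
  (forall i, selfadj (X i)) /\
  psd (1%:M - \sum_(i < g) tensmx (A i) (X i)).

Definition sigz : 'M[C]_2 := \matrix_(i < 2, j < 2)
  (if (i == j) then (if (i == 0 :> nat)%N then 1 else -1) else 0).
Definition sigx : 'M[C]_2 := \matrix_(i < 2, j < 2)
  (if (i == j) then 0 else 1).

Fixpoint dimF (m : nat) : nat := if m is m'.+1 then (dimF m' * 2)%N else 2%N.

(* Fmat m = F^[m+2] = (F_1, ..., F_(m+2)), indexed by 'I_(m+2) *)
Fixpoint Fmat (m : nat) : 'I_m.+2 -> 'M[C]_(dimF m) :=
  match m return 'I_m.+2 -> 'M[C]_(dimF m) with
  | 0 => fun i => if (i == 0 :> nat)%N then sigz else sigx
  | m'.+1 => fun i =>
      if (i < m'.+2)%N then tensmx (@Fmat m' (inord i)) sigz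
      else tensmx (1%:M : 'M[C]_(dimF m')) sigx
  end.
End Defs.

(* Main.v *)
Require Import Defs.
From HB Require Import structures.
From mathcomp Require Import all_boot all_order all_algebra.
From mathcomp Require Import complex mxtens.
From mathcomp Require Import reals.
From mathcomp Require Import zify ring.
Import Order.TTheory GRing.Theory Num.Theory.
Local Open Scope ring_scope.


Section Gen.
Variable C : numClosedFieldType.

Lemma adjmxM m n p (A : 'M[C]_(m, n)) (B : 'M[C]_(n, p)) :
  adjmx (A *m B) = adjmx B *m adjmx A.
Proof. by rewrite /adjmx map_mxM trmx_mul. Qed.

Lemma adjmxD m n (A B : 'M[C]_(m, n)) : adjmx (A + B) = adjmx A + adjmx B.
Proof. by rewrite /adjmx map_mxD linearD. Qed.

Lemma adjmxN m n (A : 'M[C]_(m, n)) : adjmx (- A) = - adjmx A.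
Proof. by rewrite /adjmx map_mxN linearN. Qed.

Lemma adjmxB m n (A B : 'M[C]_(m, n)) : adjmx (A - B) = adjmx A - adjmx B.
Proof. by rewrite adjmxD adjmxN. Qed.

Lemma adjmxZ m n a (A : 'M[C]_(m, n)) : adjmx (a *: A) = a^* *: adjmx A.
Proof. by rewrite /adjmx map_mxZ linearZ. Qed.

Lemma adjmx_sum m n (I : finType) (F : I -> 'M[C]_(m, n)) :
  adjmx (\sum_i F i) = \sum_i adjmx (F i).
Proof. by rewrite /adjmx map_mx_sum linear_sum. Qed.

Lemma adjmx1 n : adjmx (1%:M : 'M[C]_n) = 1%:M.
Proof. by rewrite /adjmx map_mx1 trmx1. Qed.

Lemma adjmx_scalar n a : adjmx (a%:M : 'M[C]_n) = (a^*)%:M.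
Proof. by rewrite -scalemx1 adjmxZ adjmx1 scalemx1. Qed.

Lemma adjmx_tens m n p q (A : 'M[C]_(m, n)) (B : 'M[C]_(p, q)) :
  adjmx (A *t B) = adjmx A *t adjmx B.
Proof. by rewrite /adjmx map_mxT trmx_tens. Qed.

Lemma tensmxDl m n p q (A B : 'M[C]_(m, n)) (D : 'M[C]_(p, q)) :
  (A + B) *t D = A *t D + B *t D.
Proof. by apply/matrixP=> i j; rewrite !mxE mulrDl. Qed.

Lemma tensmxDr m n p q (A : 'M[C]_(m, n)) (B D : 'M[C]_(p, q)) :
  A *t (B + D) = A *t B + A *t D.
Proof. by apply/matrixP=> i j; rewrite !mxE mulrDr. Qed.

Lemma tensmxZl m n p q a (A : 'M[C]_(m, n)) (D : 'M[C]_(p, q)) :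
  (a *: A) *t D = a *: (A *t D).
Proof. by apply/matrixP=> i j; rewrite !mxE mulrA. Qed.

Lemma tensmxZr m n p q a (A : 'M[C]_(m, n)) (D : 'M[C]_(p, q)) :
  A *t (a *: D) = a *: (A *t D).
Proof. by apply/matrixP=> i j; rewrite !mxE mulrCA. Qed.

Lemma tensmxNl m n p q (A : 'M[C]_(m, n)) (D : 'M[C]_(p, q)) :
  (- A) *t D = - (A *t D).
Proof. by rewrite -scaleN1r tensmxZl scaleN1r. Qed.

Lemma tensmxNr m n p q (A : 'M[C]_(m, n)) (D : 'M[C]_(p, q)) :
  A *t (- D) = - (A *t D).
Proof. by rewrite -scaleN1r tensmxZr scaleN1r. Qed.

Lemma tensmx_suml m n p q (I : finType) (F : I -> 'M[C]_(m, n)) (D : 'M[C]_(p, q)) :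
  (\sum_i F i) *t D = \sum_i (F i *t D).
Proof.
apply: (big_morph (fun A => A *t D)); last exact: tens0mx.
by move=> A B; rewrite tensmxDl.
Qed.

Lemma tensmx_sumr m n p q (I : finType) (F : I -> 'M[C]_(p, q)) (A : 'M[C]_(m, n)) :
  A *t (\sum_i F i) = \sum_i (A *t F i).
Proof.
apply: (big_morph (fun D => A *t D)); last exact: tensmx0.
by move=> B D; rewrite tensmxDr.
Qed.

Lemma tensmx11 m n : (1%:M : 'M[C]_m) *t (1%:M : 'M[C]_n) = 1%:M.
Proof.
apply/matrixP=> i j.
case: (mxtens_indexP i)=> i0 i1; case: (mxtens_indexP j)=> j0 j1.
rewrite tensmxE !mxE -natrM mulnb; congr (_ %:R).
by rewrite (inj_eq (can_inj (@mxtens_indexK _ _))) xpair_eqE.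
Qed.

Lemma tens_scalar1 m n (a : C) :
  (a%:M : 'M[C]_m) *t (1%:M : 'M[C]_n) = a%:M.
Proof. by rewrite -[(a%:M : 'M_m)]scalemx1 tensmxZl tensmx11 scalemx1. Qed.

Lemma psd_congr n k (M : 'M[C]_n) (V : 'M[C]_(n, k)) :
  psd M -> psd (adjmx V *m M *m V).
Proof.
move=> hM v; have := hM (V *m v).
by rewrite adjmxM !mulmxA.
Qed.

Lemma psd_scale n (c : C) (M : 'M[C]_n) : 0 < c -> psd (c *: M) -> psd M.
Proof.
move=> c0 h v; have := h v.
by rewrite -scalemxAr -scalemxAl mxE pmulr_rge0.
Qed.

End Gen.


Section Sig.
Variable C : numClosedFieldType.
Local Notation z := (sigz C).
Local Notation x := (sigx C).

Ltac two := apply/matrixP=> -[[|[|?]] ?] -[[|[|?]] ?] //;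
  rewrite !mxE ?big_ord_recl ?big_ord0 ?mxE /=;
  rewrite ?mxE /= ?mulr0 ?mul0r ?mulr1 ?mul1r ?addr0 ?add0r ?mulrNN ?oppr0 ?mulN1r ?mulrN1 ?opprK //;
  try by rewrite ?mulr1 ?subrr ?addNr ?conjC1 ?conjC0 ?conjCN1.

Lemma sigzz : z *m z = 1%:M. Proof. two. Qed.
Lemma sigxx : x *m x = 1%:M. Proof. two. Qed.
Lemma sigzx : z *m x + x *m z = 0. Proof. two. Qed.
Lemma sigz_adj : adjmx z = z. Proof. rewrite /adjmx. two. Qed.
Lemma sigx_adj : adjmx x = x. Proof. rewrite /adjmx. two. Qed.
End Sig.

Section Cliff.
Variable C : numClosedFieldType.
Local Notation z := (sigz C).
Local Notation x := (sigx C).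

Definition cliff g d (F : 'I_g -> 'M[C]_d) :=
  [/\ forall j, adjmx (F j) = F j,
      forall j k, F j *m F k + F k *m F j = ((j == k)%:R *+ 2)%:M &
      exists W, adjmx W *m W = 1%:M /\ forall j, W *m F j = - (F j *m W)].



Arguments cliff {g d}.

Lemma sigxz : x *m z = - (z *m x).
Proof. by apply/eqP; rewrite -addr_eq0 addrC sigzx. Qed.

Lemma J_unit : adjmx (z *m x) *m (z *m x) = 1%:M.
Proof.
rewrite adjmxM sigz_adj sigx_adj -mulmxA (mulmxA z) sigzz mul1mx sigxx //.
Qed.

Lemma Jz : (z *m x) *m z = - (z *m (z *m x)).
Proof. by rewrite -mulmxA sigxz mulmxN !mulmxA sigzz. Qed.

Lemma Jx : (z *m x) *m x = - (x *m (z *m x)).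
Proof. by rewrite -mulmxA sigxx mulmx1 mulmxA sigxz mulNmx -mulmxA sigxx mulmx1 opprK. Qed.

Lemma scal2 d : ((true)%:R *+ 2)%:M = (1%:M + 1%:M : 'M[C]_d).
Proof. by rewrite /= mulr2n -scalemx1 scalerDl scale1r. Qed.

Lemma scal0 d : ((false)%:R *+ 2)%:M = (0 : 'M[C]_d).
Proof. by rewrite /= mul0rn -scalemx1 scale0r. Qed.

Lemma FmatS m (j : 'I_m.+3) : @Fmat C m.+1 j =
  if (j < m.+2)%N then (@Fmat C m (inord j)) *t z else (1%:M : 'M_(dimF m)) *t x.
Proof. by []. Qed.

Lemma cliff_Fmat m : cliff (@Fmat C m).
Proof.
elim: m => [|m [IHa IHb [W [IHW1 IHW2]]]].
  split.
  - by case=> [[|[|?]] ?] //=; rewrite ?sigz_adj ?sigx_adj.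
  - case=> [[|[|?]] ?] //; case=> [[|[|?]] ?] //=.
    + by rewrite sigzz scal2.
    + by rewrite sigzx scal0.
    + by rewrite addrC sigzx scal0.
    + by rewrite sigxx scal2.
  - exists (z *m x); split; first exact: J_unit.
    case=> [[|[|?]] ?] //=; [exact: Jz | exact: Jx].
split.
- move=> j; rewrite FmatS; case: ifP => _; rewrite adjmx_tens ?IHa ?sigz_adj ?sigx_adj ?adjmx1 //.
- move=> j k; rewrite !FmatS; case: ifP => hj; case: ifP => hk.
  + have E : (inord j == inord k :> 'I_m.+2) = (j == k).
      by rewrite -val_eqE /= !inordK.
    by rewrite !tensmx_mul sigzz -tensmxDl IHb E tens_scalar1.
  + have -> : (j == k) = false.
      apply/negbTE; apply/eqP=> ejk; by rewrite ejk hk in hj.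
    by rewrite !tensmx_mul mul1mx mulmx1 -tensmxDr sigzx tensmx0 scal0.
  + have -> : (j == k) = false.
      apply/negbTE; apply/eqP=> ejk; by rewrite ejk hk in hj.
    by rewrite !tensmx_mul mul1mx mulmx1 -tensmxDr addrC sigzx tensmx0 scal0.
  + have -> : (j == k) = true.
      have := ltn_ord j; have := ltn_ord k; move/negbT: hj; move/negbT: hk.
      rewrite -!leqNgt => hk hj hk' hj'; apply/eqP/val_inj => /=; lia.
    rewrite !tensmx_mul mul1mx sigxx tensmx11 scal2; reflexivity.
- exists ((1%:M : 'M[C]_(dimF m)) *t (z *m x)); split.
    rewrite adjmx_tens adjmx1 tensmx_mul mul1mx J_unit tensmx11; reflexivity.
  move=> j; rewrite FmatS; case: ifP => _.
    rewrite !tensmx_mul mul1mx mulmx1 Jz tensmxNr; reflexivity.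
  rewrite !tensmx_mul mul1mx Jx tensmxNr; reflexivity.
Qed.
End Cliff.
Arguments cliff {C g d}.


Section Core.
Variable C : numClosedFieldType.
Variables (g d : nat) (F : 'I_g -> 'M[C]_d).
Hypothesis hF : cliff F.

Lemma conjM' (a b : C) : (a * b)^* = a^* * b^*. Proof. exact: rmorphM. Qed.
Lemma conjV' (a : C) : (a^-1)^* = (a^*)^-1. Proof. exact: fmorphV. Qed.
Lemma conjX' (a : C) k : (a ^+ k)^* = (a^*) ^+ k. Proof. exact: rmorphXn. Qed.
Lemma conj2 : (2 : C)^* = 2. Proof. exact: (rmorph_nat _ 2). Qed.
Lemma conj_sum (I : finType) (f : I -> C) : (\sum_i f i)^* = \sum_i (f i)^*.
Proof. exact: rmorph_sum. Qed.

Lemma selfadj_comb n (a : 'I_g -> C) (X : 'I_g -> 'M[C]_n) :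
  (forall k, (a k)^* = a k) -> (forall k, selfadj (X k)) ->
  selfadj (\sum_k a k *: X k).
Proof.
move=> ha hX; rewrite /selfadj adjmx_sum; apply: eq_bigr => k _.
by rewrite adjmxZ ha hX.
Qed.

Lemma refl_core (w : 'I_g -> C) (wr : forall j, (w j)^* = w j)
  (c0 : 0 < \sum_j w j ^+ 2) n (X : 'I_g -> 'M[C]_n) :
  inDA F X ->
  inDA F (fun j => X j - (2 / (\sum_j w j ^+ 2) * w j) *: \sum_k w k *: X k).
Proof.
case: hF => Fadj Fanti [W [hW1 hW2]].
set c := \sum_j w j ^+ 2.
have cr : c^* = c.
  by rewrite /c conj_sum; apply: eq_bigr => j _; rewrite conjX' wr.
have cn0 : c != 0 by rewrite gt_eqF.
set SX := \sum_k w k *: X k.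
move=> [hX hM]; split.
  move=> j; rewrite /selfadj adjmxB adjmxZ.
  have -> : adjmx SX = SX.
    by apply: selfadj_comb.
  by rewrite hX !conjM' conjV' conj2 cr wr.
set S := \sum_j w j *: F j.
have adjS : adjmx S = S by apply: selfadj_comb.
have hSF k : S *m F k + F k *m S = (2 * w k)%:M.
  rewrite /S mulmx_suml mulmx_sumr -big_split /=.
  rewrite (eq_bigr (fun j => w j *: ((j == k)%:R *+ 2)%:M)); last first.
    by move=> j _; rewrite -scalemxAl -scalemxAr -scalerDr Fanti.
  rewrite (bigD1 k) //= big1 ?addr0; last first.
    by move=> j /negbTE ->; rewrite scal0 scaler0.
  by rewrite eqxx scale_scalar_mx mulr_natr mulr_natl.
have e1 : S *m S = \sum_k w k *: (S *m F k).
  by rewrite {2}/S mulmx_sumr; apply: eq_bigr => k _; rewrite scalemxAr.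
have e2 : S *m S = \sum_k w k *: (F k *m S).
  by rewrite {1}/S mulmx_suml; apply: eq_bigr => k _; rewrite scalemxAl.
have hSS : S *m S = c%:M.
  have h2 : (S *m S) *+ 2 = c%:M *+ 2.
    rewrite mulr2n {1}e1 e2 -big_split /=.
    rewrite (eq_bigr (fun k => (2 * w k ^+ 2) *: 1%:M)); last first.
      move=> k _; rewrite -scalerDr hSF -scalemx1 scalerA.
      by rewrite mulrCA expr2.
    by rewrite -scaler_suml -mulr_sumr -[c%:M]scalemx1 -scaler_nat scalerA.
  apply: (@scalerI _ _ 2); first by rewrite pnatr_eq0.
  by rewrite !scaler_nat.
have hWF k : adjmx W *m F k *m W = - F k.
  rewrite -mulmxA.
  have -> : F k *m W = - (W *m F k) by rewrite hW2 opprK.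
  by rewrite mulmxN mulmxA hW1 mul1mx.
have hWS : adjmx W *m S *m W = - S.
  rewrite /S mulmx_sumr mulmx_suml -sumrN; apply: eq_bigr => k _.
  by rewrite -scalemxAr -scalemxAl hWF scalerN.
set T := S *m W.
have adjT : adjmx T = adjmx W *m S by rewrite adjmxM adjS.
have TT : adjmx T *m T = c%:M.
  rewrite adjT /T mulmxA -(mulmxA (adjmx W)) hSS.
  by rewrite mul_mx_scalar -scalemxAl hW1 scalemx1.
have TFT k : adjmx T *m F k *m T = c *: F k - (2 * w k) *: S.
  have hSFS : S *m F k *m S = (2 * w k) *: S - c *: F k.
    have -> : S *m F k = (2 * w k)%:M - F k *m S by rewrite -hSF addrK.
    by rewrite mulmxBl mul_scalar_mx -mulmxA hSS mul_mx_scalar.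
  rewrite adjT /T !mulmxA -(mulmxA (adjmx W) S) -(mulmxA (adjmx W) (S *m F k) S).
  rewrite hSFS mulmxBr mulmxBl -scalemxAr -scalemxAl hWS.
  rewrite -scalemxAr -scalemxAl hWF !scalerN opprK addrC //.

apply: (@psd_scale C _ c _ c0).
set A := \sum_k F k *t X k.
set B := \sum_k w k *: (S *t X k).
have hL : \sum_(i < g) F i *t (X i - (2 / c * w i) *: SX) = A - (2 / c) *: B.
  rewrite (eq_bigr (fun i => F i *t X i - (2 / c) *: (w i *: (F i *t SX)))); last first.
    by move=> i _; rewrite tensmxDr tensmxNr tensmxZr scalerA.
  rewrite sumrB -scaler_sumr; congr (_ - _ *: _).
  rewrite (eq_bigr (fun i => (w i *: F i) *t SX)); last first.
    by move=> i _; rewrite tensmxZl.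
  rewrite -tensmx_suml /SX tensmx_sumr /B; apply: eq_bigr => k _.
  by rewrite tensmxZr.
have hR : \sum_k (adjmx (T *t 1%:M) *m (F k *t X k) *m (T *t (1%:M : 'M_n))) =
    c *: A - 2 *: B.
  rewrite (eq_bigr (fun k => c *: (F k *t X k) - 2 *: (w k *: (S *t X k)))); last first.
    move=> k _; rewrite adjmx_tens adjmx1 !tensmx_mul mul1mx mulmx1 TFT.
    by rewrite tensmxDl tensmxNl !tensmxZl scalerA.
  by rewrite sumrB -!scaler_sumr.
have E : c *: (1%:M - \sum_(i < g) F i *t (X i - (2 / c * w i) *: SX)) =
    adjmx (T *t (1%:M : 'M_n)) *m (1%:M - A) *m (T *t 1%:M).
  rewrite mulmxBr mulmxBl mulmx1 /A mulmx_sumr mulmx_suml hR.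
  rewrite adjmx_tens adjmx1 tensmx_mul mul1mx TT tens_scalar1.
  rewrite hL scalerBr scalerBr scalerA mulrCA mulfV // mulr1 scalemx1 //.
rewrite E; exact: psd_congr.
Qed.
End Core.
Arguments refl_core {C g d F} hF {w} wr c0 {n X}.


Section Decomp.
Variable R : realFieldType.
Variable g : nat.

Definition refl (w : 'I_g -> R) : 'M[R]_g :=
  \matrix_(i, l) ((i == l)%:R - 2 / (\sum_t w t ^+ 2) * (w i * w l)).

Lemma sum_delta (f : 'I_g -> R) i : \sum_l (i == l)%:R * f l = f i.
Proof.
rewrite (bigD1 i) //= big1 ?addr0 ?eqxx ?mul1r // => l hl.
by rewrite eq_sym (negbTE hl) mul0r.
Qed.

Lemma refl_tr w : (refl w)^T = refl w.
Proof. by apply/matrixP=> i j; rewrite !mxE eq_sym [w j * _]mulrC. Qed.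

Lemma refl_sq w : 0 < \sum_t w t ^+ 2 -> refl w *m refl w = 1%:M.
Proof.
move=> c0; set c := \sum_t w t ^+ 2.
have cn0 : c != 0 by rewrite gt_eqF.
apply/matrixP=> i k; rewrite !mxE.
rewrite (eq_bigr (fun l => (i == l)%:R * ((l == k)%:R - 2 / c * (w l * w k))
     - 2 / c * w i * (w l * ((l == k)%:R - 2 / c * (w l * w k))))); last first.
  by move=> l _; rewrite !mxE; ring.
rewrite sumrB sum_delta -mulr_sumr.
have -> : \sum_l w l * ((l == k)%:R - 2 / c * (w l * w k)) = w k - 2 / c * w k * c.
  rewrite (eq_bigr (fun l => (k == l)%:R * w l - 2 / c * w k * (w l ^+ 2))); last first.
    by move=> l _; rewrite mulrBr eq_sym mulrC; congr (_ - _); rewrite expr2; ring.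
  by rewrite sumrB sum_delta -mulr_sumr.
rewrite /c.
field; exact: cn0.
Qed.

Lemma orth_decomp (P : 'M[R]_g -> Prop) :
  P 1%:M -> (forall A B, P A -> P B -> P (A *m B)) ->
  (forall w, 0 < \sum_t w t ^+ 2 -> P (refl w)) ->
  forall U : 'M[R]_g, U^T *m U = 1%:M -> P U.
Proof.
move=> P1 PM PR.
suff H : forall k U, U^T *m U = 1%:M ->
    (forall i j : 'I_g, (j < g - k)%N -> U i j = (i == j)%:R) -> P U.
  by move=> U hU; apply: (H g U hU) => i j; rewrite subnn.
elim=> [|k IH] U hU hc.
  suff -> : U = 1%:M by [].
  by apply/matrixP => i j; rewrite mxE hc // subn0.
have horth j l : \sum_t U t j * U t l = (j == l)%:R.
  have := congr1 (fun M : 'M[R]_g => M j l) hU; rewrite !mxE => <-.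
  by apply: eq_bigr => t _; rewrite mxE.
case: (leqP g k) => hgk.
  by apply: IH hU _ => i j hj; exfalso; lia.
have hr : (g - k.+1 < g)%N by lia.
set rr := Ordinal hr.
set w := fun i : 'I_g => U i rr - (i == rr)%:R.
have hjr (j : 'I_g) : (j < g - k.+1)%N -> (j == rr) = false.
  by move=> h; apply/negbTE; apply/negP => /eqP ejr; move: h; rewrite ejr /= ltnn.
have hUjr (j : 'I_g) : (j < g - k.+1)%N -> U j rr = 0.
  move=> hj; have := horth j rr.
  rewrite (eq_bigr (fun t => (j == t)%:R * U t rr)); last first.
    by move=> t _; rewrite hc // eq_sym.
  by rewrite sum_delta hjr.
have hcol (j : 'I_g) : (j < g - k)%N -> (j < g - k.+1)%N \/ j = rr.
  case: (ltnP j (g - k.+1)) => h hj; [by left | right; apply/val_inj => /=; lia].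
set c := \sum_t w t ^+ 2.
case: (eqVneq c 0) => hc0.
  have w0 t : w t = 0.
    apply/eqP; rewrite -sqrf_eq0; apply/eqP.
    by apply: (psumr_eq0P _ hc0) => // t' _; exact: sqr_ge0.
  apply: IH hU _ => i j hj; case: (hcol j hj) => [h|->]; first exact: hc.
  by have := w0 i; rewrite /w => /eqP; rewrite subr_eq0 => /eqP.
have c0 : 0 < c.
  by rewrite lt_def hc0 /=; apply: sumr_ge0 => t _; exact: sqr_ge0.
have HH := @refl_sq w c0.
have -> : U = refl w *m (refl w *m U) by rewrite mulmxA HH mul1mx.
apply: PM; first exact: PR.
apply: IH.
  by rewrite trmx_mul mulmxA -(mulmxA U^T) refl_tr HH mulmx1 hU.
move=> i j hj; rewrite mxE.
case: (hcol j hj) => [h|->].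
  rewrite (eq_bigr (fun l => (j == l)%:R * refl w i l)); last first.
    by move=> l _; rewrite hc // eq_sym mulrC.
  rewrite sum_delta mxE.
  have -> : w j = 0 by rewrite /w hUjr // hjr // subr0.
  by rewrite mulr0 mulr0 subr0.
rewrite (eq_bigr (fun l => (i == l)%:R * U l rr - 2 / c * w i * (w l * U l rr))); last first.
  by move=> l _; rewrite mxE; ring.
rewrite sumrB sum_delta -mulr_sumr.
have hs : \sum_l w l * U l rr = 1 - U rr rr.
  rewrite (eq_bigr (fun l => U l rr * U l rr - (rr == l)%:R * U l rr)); last first.
    by move=> l _; rewrite /w mulrBl eq_sym.
  by rewrite sumrB horth sum_delta eqxx.
have hcv : c = 2 * (1 - U rr rr).
  rewrite /c (eq_bigr (fun l => U l rr * U l rr + (rr == l)%:R * (1 - 2 * U l rr))); last first.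
    by move=> l _; rewrite /w eq_sym; case: (rr == l); rewrite /=; ring.
  by rewrite big_split /= horth sum_delta eqxx /=; ring.
have hs0 : 1 - U rr rr != 0.
  by apply: contraNneq hc0; rewrite hcv => ->; rewrite mulr0.
rewrite hs hcv /w; field; exact: hs0.
Qed.

End Decomp.
Arguments refl {R g}.
Arguments sum_delta {R g}.
Arguments orth_decomp {R g}.


Section Final.
Variable R : realType.
Local Notation C := R[i].

Lemma RC_0 : (0 : R)%:C%C = 0 :> C. Proof. exact: rmorph0. Qed.
Lemma RC_1 : (1 : R)%:C%C = 1 :> C. Proof. exact: rmorph1. Qed.
Lemma RC_B (a b : R) : (a - b)%:C%C = a%:C%C - b%:C%C :> C. Proof. exact: rmorphB. Qed.
Lemma RC_M (a b : R) : (a * b)%:C%C = a%:C%C * b%:C%C :> C. Proof. exact: rmorphM. Qed.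
Lemma RC_V (a : R) : (a^-1)%:C%C = (a%:C%C)^-1 :> C. Proof. exact: fmorphV. Qed.
Lemma RC_nat k : (k%:R : R)%:C%C = k%:R :> C. Proof. exact: rmorph_nat. Qed.
Lemma RC_X (a : R) k : (a ^+ k)%:C%C = (a%:C%C) ^+ k :> C. Proof. exact: rmorphXn. Qed.
Lemma RC_sign b : ((-1) ^+ b : R)%:C%C = (-1) ^+ b :> C. Proof. exact: rmorph_sign. Qed.
Lemma RC_sum (I : finType) (f : I -> R) : (\sum_i f i)%:C%C = \sum_i (f i)%:C%C :> C.
Proof. exact: rmorph_sum. Qed.
Lemma RC_conj (a : R) : (a%:C%C)^* = a%:C%C :> C.
Proof. exact: conjc_real. Qed.

Lemma inDA_ext g d (A : 'I_g -> 'M[C]_d) n (X Y : 'I_g -> 'M[C]_n) :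
  (forall j, X j = Y j) -> inDA A X -> inDA A Y.
Proof.
move=> e [h1 h2]; split; first by move=> j; rewrite -e.
have <- : \sum_i A i *t X i = \sum_i A i *t Y i by apply: eq_bigr => i _; rewrite e.
exact: h2.
Qed.

Variable m : nat.
Local Notation g := m.+2.
Local Notation F := (@Fmat C m).

Definition actR (U : 'M[R]_g) {n} (X : 'I_g -> 'M[C]_n) :=
  fun j => \sum_k (U j k)%:C%C *: X k.

Definition GoodR (U : 'M[R]_g) :=
  forall n (X : 'I_g -> 'M[C]_n), inDA F X -> inDA F (actR U X).

Lemma GoodR1 : GoodR 1%:M.
Proof.
move=> n X; apply: inDA_ext => j; rewrite /actR (bigD1 j) //= big1 ?addr0.
  by rewrite mxE eqxx RC_1 scale1r.
by move=> k hk; rewrite mxE eq_sym (negbTE hk) RC_0 scale0r.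
Qed.

Lemma GoodRM A B : GoodR A -> GoodR B -> GoodR (A *m B).
Proof.
move=> hA hB n X hX; have := hA _ _ (hB _ _ hX); apply: inDA_ext => j.
rewrite /actR.
rewrite (eq_bigr (fun l => \sum_k ((A j l)%:C%C * (B l k)%:C%C) *: X k)); last first.
  by move=> l _; rewrite scaler_sumr; apply: eq_bigr => k _; rewrite scalerA.
rewrite exchange_big /=; apply: eq_bigr => k _.
by rewrite mxE RC_sum scaler_suml; apply: eq_bigr => l _; rewrite RC_M.
Qed.

Lemma GoodR_refl (w : 'I_g -> R) : 0 < \sum_t w t ^+ 2 -> GoodR (refl w).
Proof.
move=> c0 n X hX.
set w' := fun j => (w j)%:C%C.
have wr j : (w' j)^* = w' j by exact: RC_conj.
have c0' : 0 < \sum_j w' j ^+ 2.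
  rewrite (eq_bigr (fun j => (w j ^+ 2)%:C%C)); last by move=> j _; rewrite RC_X.
  by rewrite -RC_sum -RC_0 ltcR.
have := refl_core (cliff_Fmat C m) wr c0' hX; apply: inDA_ext => j.
rewrite /actR [RHS](eq_bigr (fun k => ((j == k)%:R *: X k)
    - (2 / (\sum_j w' j ^+ 2) * w' j) *: (w' k *: X k))); last first.
  move=> k _; rewrite /refl mxE RC_B RC_nat !RC_M RC_V RC_nat RC_sum scalerBl scalerA.
  congr (_ - _ *: _); rewrite /w' mulrA; congr (_ * _ * _ * _).
  by congr (_^-1); apply: eq_bigr => t _; rewrite RC_X.
rewrite sumrB -scaler_sumr; congr (_ - _).
rewrite (bigD1 j) //= big1 ?addr0 ?eqxx ?scale1r //.
by move=> k hk; rewrite eq_sym (negbTE hk) scale0r.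
Qed.

Lemma GoodR_orth (U : 'M[R]_g) : U^T *m U = 1%:M -> GoodR U.
Proof.
apply: orth_decomp; [exact: GoodR1 | exact: GoodRM | exact: GoodR_refl].
Qed.

End Final.

Theorem mainTheorem4 (R : realType) (m : nat) (U : 'M[R]_(m.+2))
    (hU : U^T *m U = 1%:M) (n : nat) (X : 'I_(m.+2) -> 'M[R[i]]_n)
    (hX : inDA (@Fmat R[i] m) X) :
  inDA (@Fmat R[i] m)
    (fun j => \sum_(k < m.+2) (U j k)%:C%C *: X k)
  /\ (forall s : 'I_(m.+2) -> bool,
        inDA (@Fmat R[i] m) (fun j => (-1) ^+ s j *: X j)).
Proof.
split; first exact: (@GoodR_orth R m U hU n X hX).
move=> s.
set D : 'M[R]_(m.+2) := \matrix_(i, j) ((i == j)%:R * (-1) ^+ s i).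
have hD : D^T *m D = 1%:M.
  apply/matrixP=> i j; rewrite !mxE.
  rewrite (eq_bigr (fun l => (i == l)%:R * ((l == j)%:R * (-1) ^+ s l * (-1) ^+ s l))); last first.
    by move=> l _; rewrite !mxE eq_sym; ring.
  rewrite sum_delta -mulrA -expr2 sqrr_sign mulr1 //.
have := @GoodR_orth R m D hD n X hX; apply: inDA_ext => j.
rewrite /actR (bigD1 j) //= big1 ?addr0.
  by rewrite mxE eqxx mul1r RC_sign.
by move=> k hk; rewrite mxE eq_sym (negbTE hk) mul0r RC_0 scale0r.
Qed.
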